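(* Let $K_1,\dots,K_n$ be an operator Frobenius algebra on an $n$-manifold with structure functions $a_{ij}^s$, pairwise symmetries of each other, and work in the real-analytic (or formal) category. Writing the manifold in local coordinates $u=(u^1,\dots,u^n)$, consider the system of PDEs $$u_{t_j}=K_j(u)\,u_x,\qquad j=1,\dots,n,$$ for $u=u(x;t_1,\dots,t_n)$ with a scalar variable $x$. Let $u$ be any (analytic or formal) solution such that the Jacobian matrix $\partial u/\partial t$ is invertible, and for fixed $x$ let $t_i=t_i(u;x)$ be obtained by inverting $(t_1,\dots,t_n)\mapsto u(x;t)$. Then for each fixed value of $x$, the operator field $K=\sum_i t_i(u;x)K_i$ is a common symmetry of $K_1,\dots,K_n$.
   Context: For operator fields ($(1,1)$-tensor fields) $L,M$ and vector fields $\xi,\eta$ set $\langle L,M\rangle(\xi,\eta)=LM[\xi,\eta]+[L\xi,M\eta]-L[\xi,M\eta]-M[L\xi,\eta]$. Commuting operator fields $L,M$ are symmetries of each other if $\langle L,M\rangle(\xi,\xi)=0$ for all $\xi$; a common symmetry of several operator fields is an operator field commuting with and being a symmetry of each of them. An operator Frobenius algebra on an $n$-manifold $\mathsf M$ is given by $n$ smooth pairwise commuting operator fields $K_1,\dots,K_n$ such that at each $x\in\mathsf M$: (A1) there is $\xi\in T_x\mathsf M$ with $K_1\xi,\dots,K_n\xi$ linearly independent, and (A2) there is $a\in T_x^*\mathsf M$ with $K_1^*a,\dots,K_n^*a$ linearly independent. Its structure functions $a_{ij}^s$ are defined by $K_iK_j=\sum_s a_{ij}^sK_s$. *)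

(* Defs.v *)
(* Everything is stated in a local chart:
   the manifold is an open set U of R^n (column vectors 'cV[R]_n). *)
From HB Require Import structures.
From mathcomp Require Import all_boot all_order all_algebra.
From mathcomp Require Import all_classical all_reals all_analysis.
Set Implicit Arguments. Unset Strict Implicit. Unset Printing Implicit Defensive.
Import Order.TTheory GRing.Theory Num.Theory.
Import numFieldNormedType.Exports.
Local Open Scope classical_set_scope.
Local Open Scope ring_scope.

Section Defs.
Variable R : realType.

(** Real-analyticity of a scalar function on an open set U of R^m: near each
    point a of U, f is the sum of an absolutely convergent power series
    centred at a (summed along the exhaustion by cubes [0,N]^m of multi-indices). *)
Definition ps_cube_sum m (c : ('I_m -> nat) -> R) (a x : 'cV[R]_m) (N : nat) : R :=
  \sum_(al : {ffun 'I_m -> 'I_N.+1})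
     c (fun i => nat_of_ord (al i)) * \prod_(i < m) (x i 0 - a i 0) ^+ al i.

Definition ps_cube_abs_sum m (c : ('I_m -> nat) -> R) (a x : 'cV[R]_m) (N : nat) : R :=
  \sum_(al : {ffun 'I_m -> 'I_N.+1})
     `|c (fun i => nat_of_ord (al i))| * \prod_(i < m) `|x i 0 - a i 0| ^+ al i.

Definition analytic_on m (U : set 'cV[R]_m) (f : 'cV[R]_m -> R) : Prop :=
  forall a, U a -> exists r : R, 0 < r /\
    exists c : ('I_m -> nat) -> R, forall x, `|x - a| < r ->
      (exists B : R, forall N, ps_cube_abs_sum c a x N <= B) /\
      (ps_cube_sum c a x @ \oo --> f x).

Definition mx_analytic_on m p q (U : set 'cV[R]_m) (F : 'cV[R]_m -> 'M[R]_(p, q)) : Prop :=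
  forall i j, analytic_on U (fun x => F x i j).

Definition vfield n := 'cV[R]_n -> 'cV[R]_n.
Definition opfield n := 'cV[R]_n -> 'M[R]_n.

Definition lie n (xi eta : vfield n) : vfield n :=
  fun p => 'D_(xi p) eta p - 'D_(eta p) xi p.

Definition opapp n (L : opfield n) (xi : vfield n) : vfield n :=
  fun p => L p *m xi p.

Definition opbracket n (L M : opfield n) (xi eta : vfield n) : vfield n :=
  fun p => L p *m (M p *m lie xi eta p) + lie (opapp L xi) (opapp M eta) p
           - L p *m lie xi (opapp M eta) p - M p *m lie (opapp L xi) eta p.

Definition vfield_on n (V : set 'cV[R]_n) (xi : vfield n) : Prop :=
  forall p, V p -> differentiable xi p.

Definition commute_on n (V : set 'cV[R]_n) (L M : opfield n) : Prop :=
  forall p, V p -> L p *m M p = M p *m L p.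

Definition symmetry_on n (V : set 'cV[R]_n) (L M : opfield n) : Prop :=
  forall xi, vfield_on V xi -> forall p, V p -> opbracket L M xi xi p = 0.

Definition common_symmetry_on n (V : set 'cV[R]_n) (K : opfield n)
    (Ks : 'I_n -> opfield n) : Prop :=
  forall j, commute_on V K (Ks j) /\ symmetry_on V K (Ks j).

Definition op_frobenius_algebra n (U : set 'cV[R]_n) (Ks : 'I_n -> opfield n) : Prop :=
  (forall i, mx_analytic_on U (Ks i)) /\
  (forall i j, commute_on U (Ks i) (Ks j)) /\
  (forall p, U p -> exists xi : 'cV[R]_n, forall c : 'I_n -> R,
      \sum_(i < n) c i *: (Ks i p *m xi) = 0 -> forall i, c i = 0) /\
  (forall p, U p -> exists a : 'rV[R]_n, forall c : 'I_n -> R,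
      \sum_(i < n) c i *: (a *m Ks i p) = 0 -> forall i, c i = 0).

Definition xt_pt n (x : R) (t : 'cV[R]_n) : 'cV[R]_(1 + n) := col_mx (x%:M) t.
Definition dir_x n : 'cV[R]_(1 + n) := delta_mx (lshift n ord0) 0.
Definition dir_t n (j : 'I_n) : 'cV[R]_(1 + n) := delta_mx (rshift 1 j) 0.

End Defs.

(* Main.v *)
Require Import Defs.
From HB Require Import structures.
From mathcomp Require Import all_boot all_order all_algebra.
From mathcomp Require Import all_classical all_reals all_analysis.
From mathcomp Require Import ring.
Set Implicit Arguments. Unset Strict Implicit. Unset Printing Implicit Defensive.
Import Order.TTheory GRing.Theory Num.Theory.
Import numFieldNormedType.Exports.
Local Open Scope ring_scope.

Section Comb.
Variables (m N : nat).
Definition deg (al : {ffun 'I_m -> 'I_N.+2}) : nat := (\sum_k nat_of_ord (al k))%N.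
Definition one_ord : 'I_N.+2 := @Ordinal N.+2 1 isT.
Definition z0 : {ffun 'I_m -> 'I_N.+2} := [ffun _ => ord0].
Definition e1 (i : 'I_m) : {ffun 'I_m -> 'I_N.+2} := [ffun k => if k == i then one_ord else ord0].

Lemma deg0 al : (deg al == 0)%N = (al == z0).
Proof.
rewrite /deg sum_nat_eq0; apply/forallP/eqP => [h|->].
  by apply/ffunP => k; rewrite ffunE; apply/val_inj => /=; apply/eqP; exact: (h k).
by move=> k; rewrite ffunE.
Qed.

Lemma deg_e1 i : deg (e1 i) = 1%N.
Proof.
rewrite /deg (bigD1 i) //= ffunE eqxx /= big1 // => k ki.
by rewrite ffunE (negbTE ki).
Qed.

Lemma e1_inj : injective e1.
Proof.
move=> i j /ffunP /(_ i); rewrite !ffunE eqxx.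
by case: (i =P j) => // _ /(congr1 val).
Qed.

Lemma deg1 al : (deg al == 1)%N = (al \in [set e1 i | i in 'I_m]).
Proof.
apply/idP/imsetP => [h|[i _ ->]]; last by rewrite deg_e1.
have : (deg al != 0)%N by rewrite (eqP h).
rewrite /deg sum_nat_eq0 => /forallPn [i /= hi].
exists i => //.
move: h; rewrite /deg (bigD1 i) //= => /eqP h.
have ai : nat_of_ord (al i) = 1%N.
  by move: hi h; case: (nat_of_ord (al i)) => [|[|k]] //= _; rewrite addSn.
move: h; rewrite ai add1n => /eqP; rewrite eqSS sum_nat_eq0 => /forallP h0.
apply/ffunP => k; rewrite ffunE; apply/val_inj => /=.
case: (k =P i) => [->//|/eqP ki]; apply/eqP; move: (h0 k); rewrite ki; exact.
Qed.

Lemma sum_le1 (R : nmodType) (F : {ffun 'I_m -> 'I_N.+2} -> R) :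
  \sum_(al | (deg al <= 1)%N) F al = F z0 + \sum_(i < m) F (e1 i).
Proof.
rewrite (bigID (fun al => deg al == 0)%N) /=; congr (_ + _).
  rewrite (eq_bigl (fun al => al == z0)); first exact: big_pred1_eq.
  move=> al /=; rewrite deg0; case: eqP => [->|]; rewrite ?andbT ?andbF //.
  by move: (eqxx z0); rewrite -deg0 => /eqP ->.
rewrite (eq_bigl (fun al => al \in [set e1 i | i in 'I_m])).
  by rewrite big_imset //= => i j _ _; exact: e1_inj.
move=> al /=; rewrite -deg1.
by case: (deg al) => [|[|k]].
Qed.

End Comb.


Local Open Scope classical_set_scope.
Local Open Scope ring_scope.

Lemma zid (T : zmodType) (X1 X2 X3 X4 X5 X6 X7 : T) :
  0 + ((X1 + X2) - (X3 + X4)) - ((X5 + X6) - X4) - (X2 - (X7 + X6)) = X1 - X3 - X5 + X7.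
Proof.
rewrite add0r !opprD !opprK !addrA.
rewrite (addrAC _ X4 (-X2)) (addrAC _ (-X6) (-X2)) (addrAC _ (-X5) (-X2)) (addrAC _ (-X4) (-X2)).
rewrite (addrAC _ (-X3) (-X2)) addrK.
rewrite (addrAC _ (-X6) X4) (addrAC _ (-X5) X4) subrK.
rewrite (addrAC _ (-X6) X7) subrK //.
Qed.

Section Aux.
Variable R : realType.
Variable V : normedModType R.

Lemma sder_mul (f g : V -> R) p v : derivable f p v -> derivable g p v ->
  derivable (fun q => f q * g q) p v /\
  'D_v (fun q => f q * g q) p = 'D_v f p * g p + f p * 'D_v g p.
Proof.
move=> df dg.
have -> : (fun q => f q * g q) = (f * g)%R by [].
split; first exact: (derivableM df dg).
by rewrite (deriveM df dg) addrC mulrC.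
Qed.

Lemma sder_sum n (h : 'I_n -> V -> R) p v : (forall i, derivable (h i) p v) ->
  derivable (fun q => \sum_(i < n) h i q) p v /\
  'D_v (fun q => \sum_(i < n) h i q) p = \sum_(i < n) 'D_v (h i) p.
Proof.
move=> dh.
have -> : (fun q => \sum_(i < n) h i q) = \sum_(i < n) h i.
  by apply/funext => q; rewrite fct_sumE.
by split; [exact: derivable_sum | exact: derive_sum].
Qed.

Lemma mder_mul m k l (A : V -> 'M[R]_(m,k)) (B : V -> 'M[R]_(k,l)) p v :
  derivable A p v -> derivable B p v ->
  derivable (fun q => A q *m B q) p v /\
  'D_v (fun q => A q *m B q) p = 'D_v A p *m B p + A p *m 'D_v B p.
Proof.
move=> dA dB.
have eA := (derivable_mxP A p v).1 dA.
have eB := (derivable_mxP B p v).1 dB.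
have ent : forall i j, derivable (fun q => (A q *m B q) i j) p v /\
   'D_v (fun q => (A q *m B q) i j) p =
   \sum_(c < k) ('D_v (fun q => A q i c) p * B p c j + A p i c * 'D_v (fun q => B q c j) p).
  move=> i j.
  have -> : (fun q => (A q *m B q) i j) = (fun q => \sum_(c < k) (fun q => A q i c * B q c j) q).
    by apply/funext => q; rewrite mxE.
  have dh : forall c : 'I_k, derivable (fun q => A q i c * B q c j) p v.
    by move=> c; case: (sder_mul (eA i c) (eB c j)).
  case: (sder_sum dh) => d1 ->; split => //.
  by apply: eq_bigr => c _; case: (sder_mul (eA i c) (eB c j)).
have dAB : derivable (fun q => A q *m B q) p v.
  by apply/derivable_mxP => i j; case: (ent i j).
split => //.
rewrite (derive_mx dAB) (derive_mx dA) (derive_mx dB).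
apply/matrixP => i j; rewrite !mxE (ent i j).2 big_split /=; congr (_ + _);
  apply: eq_bigr => c _; rewrite !mxE //.
Qed.

Lemma mder_scale m k (s : V -> R) (A : V -> 'M[R]_(m,k)) p v :
  derivable s p v -> derivable A p v ->
  derivable (fun q => s q *: A q) p v /\
  'D_v (fun q => s q *: A q) p = 'D_v s p *: A p + s p *: 'D_v A p.
Proof.
move=> ds dA.
have eA := (derivable_mxP A p v).1 dA.
have ent : forall i j, derivable (fun q => (s q *: A q) i j) p v /\
   'D_v (fun q => (s q *: A q) i j) p = 'D_v s p * A p i j + s p * 'D_v (fun q => A q i j) p.
  move=> i j.
  have -> : (fun q => (s q *: A q) i j) = (fun q => s q * A q i j).
    by apply/funext => q; rewrite mxE.
  exact: (sder_mul ds (eA i j)).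
have dsA : derivable (fun q => s q *: A q) p v.
  by apply/derivable_mxP => i j; case: (ent i j).
split => //.
rewrite (derive_mx dsA) (derive_mx dA).
by apply/matrixP => i j; rewrite !mxE (ent i j).2.
Qed.

End Aux.

Section B.
Variable R : realType.
Variable n : nat.

Lemma bracket_expand (L M : opfield R n) (xi : vfield R n) p :
  (forall v, derivable L p v) -> (forall v, derivable M p v) ->
  (forall v, derivable xi p v) ->
  L p *m M p = M p *m L p ->
  opbracket L M xi xi p =
    'D_(L p *m xi p) M p *m xi p - 'D_(M p *m xi p) L p *m xi p
    - L p *m ('D_(xi p) M p *m xi p) + M p *m ('D_(xi p) L p *m xi p).
Proof.
move=> dL dM dxi LM.
rewrite /opbracket /lie /opapp.
rewrite (mder_mul (dM _) (dxi _)).2 (mder_mul (dL _) (dxi _)).2.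
rewrite (mder_mul (dM _) (dxi _)).2 (mder_mul (dL _) (dxi _)).2.
rewrite subrr !mulmx0 !mulmxBr !mulmxDr !mulmxA LM.
exact: zid.
Qed.

End B.

Section C.
Variable R : realType.
Variable V : normedModType R.

Lemma quad_diff (g : V -> R) a C e : 0 < e ->
  (forall x, `|x - a| < e -> `|g x| <= C * `|x - a| ^+ 2) -> differentiable g a.
Proof.
move=> e0 hg.
have ga : g a = 0.
  by apply/normr0_eq0/eqP; rewrite eq_le normr_ge0 andbT;
     move: (hg a); rewrite subrr normr0 expr0n /= mulr0; apply.
apply/diffP.
apply: (@getPex _ (fun (df : {linear V -> R}) => continuous df /\ forall x,
      g x = g (lim (nbhs a)) + df (x - lim (nbhs a)) +o_(x \near a) (x - lim (nbhs a)))).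
have l0 : linear (fun _ : V => (0:R)) by move=> ???; rewrite scaler0 addr0.
pose lM := GRing.isLinear.Build _ _ _ _ _ l0.
pose L0 : {linear V -> R} := HB.pack (fun _ : V => (0:R)) lM.
exists L0; split; first exact: cst_continuous.
have la : lim (nbhs a) = a by exact: lim_id.
rewrite la.
suff H : (fun x => g x) = (fun x => g a + L0 (x - a)) +o_ (nbhs a) (fun x => x - a).
  by move=> x; exact: (congr1 (fun h => h x) H).
apply/eqaddoP => _ /posnumP[eps].
have C1 : 0 < `|C| + 1 by rewrite ltr_pwDr // normr_ge0.
have d0 : 0 < eps%:num / (`|C| + 1) by rewrite divr_gt0.
have nb : forall d, 0 < d -> \forall x \near a, `|x - a| < d.
  move=> d dp; apply: filterS (nbhsx_ballx a _ dp) => y.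
  by rewrite -ball_normE /= distrC.
near=> x.
have h1 : `|x - a| < e by near: x; exact: nb.
have h2 : `|x - a| < eps%:num / (`|C| + 1) by near: x; exact: nb.
rewrite /= ga add0r subr0.
apply: (le_trans (hg x h1)).
rewrite expr2 mulrA ler_wpM2r // (le_trans (ler_wpM2r (normr_ge0 _) (ler_norm C))) //.
have e1 : `|C| <= `|C| + 1 by rewrite lerDl.
apply: (le_trans (ler_wpM2r (normr_ge0 _) e1)).
rewrite mulrC -ler_pdivlMr //; exact: ltW.
Unshelve. all: by end_near.
Qed.
End C.

Section Analytic.
Variable R : realType.

Lemma entry_le p q (M : 'M[R]_(p,q)) i j : `|M i j| <= `|M|.
Proof.
rewrite [leRHS]/Num.Def.normr /= mx_normrE.
exact: (le_bigmax _ (fun ij : 'I_p * 'I_q => `|M ij.1 ij.2|) (i, j)).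
Qed.

Lemma norm_le p q (M : 'M[R]_(p,q)) b : 0 <= b -> (forall i j, `|M i j| <= b) -> `|M| <= b.
Proof.
move=> b0 h; rewrite [leLHS]/Num.Def.normr /= mx_normrE.
by apply: bigmax_le => // -[i j] _; exact: h.
Qed.

Variable m : nat.

Lemma ps_split (c : ('I_m -> nat) -> R) (a x : 'cV[R]_m) N :
  ps_cube_sum c a x N.+1 =
    (c (fun _ => 0%N) + \sum_(i < m) c (fun k => nat_of_bool (k == i)) * (x i 0 - a i 0))
  + \sum_(al : {ffun 'I_m -> 'I_N.+2} | ~~ (deg al <= 1)%N)
       c (fun i => nat_of_ord (al i)) * \prod_(i < m) (x i 0 - a i 0) ^+ al i.
Proof.
rewrite /ps_cube_sum (bigID (fun al : {ffun 'I_m -> 'I_N.+2} => deg al <= 1)%N) /=.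
rewrite sum_le1; congr (_ + _ + _).
  have -> : (fun i => nat_of_ord (z0 m N i)) = (fun _ => 0%N).
    by apply/funext => i; rewrite ffunE.
  by rewrite big1 ?mulr1 // => i _; rewrite ffunE expr0.
apply: eq_bigr => i _.
have -> : (fun k => nat_of_ord (e1 N i k)) = (fun k => nat_of_bool (k == i)).
  by apply/funext => k; rewrite ffunE; case: (k == i).
congr (_ * _).
rewrite (bigD1 i) //= ffunE eqxx expr1 big1 ?mulr1 // => k ki.
by rewrite ffunE (negbTE ki) expr0.
Qed.

Lemma pow_bound (d r : R) (k : nat) : 0 < r -> 0 <= d -> d <= r -> (1 < k)%N ->
  d ^+ k <= (d / r) ^+ 2 * r ^+ k.
Proof.
move=> r0 d0 dr; case: k => [|[|j]] // _.
have -> : (d / r) ^+ 2 * r ^+ j.+2 = d ^+ 2 * r ^+ j.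
  rewrite !exprS expr0; field; exact: lt0r_neq0.
rewrite [leLHS](exprS d j.+1) exprS mulrA -expr2 ler_wpM2l ?exprn_ge0 //.
by apply: lerXn2r; rewrite // ?nnegrE // ltW.
Qed.

Lemma ps_rest_bound (c : ('I_m -> nat) -> R) (a x : 'cV[R]_m) N (r d : R) :
  0 < r -> `|x - a| <= d -> d <= r ->
  `|\sum_(al : {ffun 'I_m -> 'I_N.+2} | ~~ (deg al <= 1)%N)
       c (fun i => nat_of_ord (al i)) * \prod_(i < m) (x i 0 - a i 0) ^+ al i|
  <= (d / r) ^+ 2 * ps_cube_abs_sum c a (a + const_mx r) N.+1.
Proof.
move=> r0 xd dr.
have d0 : 0 <= d by apply: le_trans xd.
apply: (le_trans (ler_norm_sum _ _ _)).
apply: (@le_trans _ _ (\sum_(al : {ffun 'I_m -> 'I_N.+2} | ~~ (deg al <= 1)%N)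
     (d / r) ^+ 2 * (`|c (fun i => nat_of_ord (al i))| * r ^+ deg al))).
  apply: ler_sum => al hal.
  rewrite normrM mulrCA ler_wpM2l //.
  rewrite normr_prod.
  apply: (@le_trans _ _ (d ^+ deg al)).
    rewrite /deg -prodrXr; apply: ler_prod => i _.
    rewrite normrX exprn_ge0 /=; last exact: normr_ge0. apply: lerXn2r; rewrite ?nnegrE //.
    by apply: le_trans xd; have := entry_le (x - a) i 0; rewrite !mxE.
  by apply: pow_bound => //; rewrite ltnNge.
rewrite -mulr_sumr; apply: ler_wpM2l; first by rewrite exprn_ge0 // divr_ge0 // ltW.
have hy : forall al : {ffun 'I_m -> 'I_N.+2},
   `|c (fun i => nat_of_ord (al i))| * \prod_(i < m) `|(a + const_mx r) i 0 - a i 0| ^+ al i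
   = `|c (fun i => nat_of_ord (al i))| * r ^+ deg al.
  move=> al; congr (_ * _); rewrite /deg -prodrXr; apply: eq_bigr => i _.
  by rewrite !mxE addrAC subrr add0r ger0_norm // ltW.
rewrite /ps_cube_abs_sum (eq_bigr _ (fun al _ => hy al)).
rewrite [leRHS](bigID (fun al : {ffun 'I_m -> 'I_N.+2} => deg al <= 1)%N) /=.
rewrite lerDr; apply: sumr_ge0 => al _; rewrite mulr_ge0 // exprn_ge0 // ltW //.
Qed.


Lemma analytic_diff (U : set 'cV[R]_m) f a : analytic_on U f -> U a -> differentiable f a.
Proof.
move=> H Ua; case: (H a Ua) => r [r0 [c Hc]].
pose rho := r / 2.
have rho0 : 0 < rho by rewrite divr_gt0.
have rhor : rho < r by rewrite ltr_pdivrMr // ltr_pMr // ltr1n.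
pose y := a + const_mx rho : 'cV[R]_m.
have hy : `|y - a| < r.
  rewrite /y addrAC subrr add0r; apply: le_lt_trans rhor.
  apply: norm_le => [|i j]; first exact: ltW.
  by rewrite mxE ger0_norm // ltW.
case: (Hc y hy) => [[B HB] _].
pose P := fun x : 'cV[R]_m => c (fun _ => 0%N) +
   \sum_(i < m) c (fun k => nat_of_bool (k == i)) * (x i 0 - a i 0).
have key : forall x, `|x - a| < rho -> `|f x - P x| <= B / rho ^+ 2 * `|x - a| ^+ 2.
  move=> x hx; have hxr : `|x - a| < r by apply: lt_trans rhor.
  case: (Hc x hxr) => _ cv.
  have cv2 : (fun N => `|ps_cube_sum c a x N - P x|) @ \oo --> `|f x - P x|.
    by apply: cvg_norm; apply: cvgB => //; exact: cvg_cst.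
  apply: (cvgr_to_le cv2).
  near=> N.
  have hN : (0 < N)%N by near: N; exact: nbhs_infty_ge.
  rewrite -(prednK hN) ps_split -/(P x) addrAC subrr add0r.
  apply: le_trans (ps_rest_bound c N.-1 rho0 (lexx _) (ltW hx)) _.
  rewrite [leRHS]mulrC exprMn exprVn -mulrA; apply: ler_wpM2l; first exact: exprn_ge0.
  rewrite mulrC; apply: ler_wpM2r; [by rewrite invr_ge0 exprn_ge0 // ltW | exact: HB].
have gd : differentiable (fun x => f x - P x) a.
  exact: (quad_diff rho0 key).
have Pd : differentiable P a.
  have -> : P = cst (c (fun _ => 0%N)) + \sum_(i < m)
      (cst (c (fun k => nat_of_bool (k == i))) * ((fun x : 'cV[R]_m => x i 0) - cst (a i 0))).
    by apply/funext => x; rewrite /P /= fct_sumE.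
  apply: differentiableD; first exact: differentiable_cst.
  apply: differentiable_sum => i; apply: differentiableM; first exact: differentiable_cst.
  apply: differentiableB; [exact: differentiable_coord | exact: differentiable_cst].
have -> : f = P + (fun x => f x - P x) by apply/funext => x /=; rewrite addrC subrK.
exact: differentiableD.
Unshelve. all: by end_near.
Qed.

End Analytic.

Section E.
Variable R : realType.
Variable V : normedModType R.

Definition mxdiff p q (M : V -> 'M[R]_(p,q)) z := forall i j, differentiable (fun x => M x i j) z.

Lemma mxdiff_derivable p q (M : V -> 'M[R]_(p,q)) z : mxdiff M z -> forall v, derivable M z v.
Proof. by move=> h v; apply/derivable_mxP => i j; exact: diff_derivable. Qed.


Lemma mxdiff_entry p q (M : V -> 'M[R]_(p,q)) z v i j : mxdiff M z ->
  'D_v M z i j = 'd (fun x => M x i j) z v.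
Proof.
move=> h; rewrite (derive_mx (mxdiff_derivable h (v:=v))) mxE.
exact: deriveE.
Qed.

Lemma mxdiff_lin p q (M : V -> 'M[R]_(p,q)) z k (a : 'I_k -> R) (v : 'I_k -> V) :
  mxdiff M z -> 'D_(\sum_(i < k) a i *: v i) M z = \sum_(i < k) a i *: 'D_(v i) M z.
Proof.
move=> h; apply/matrixP => i j.
rewrite (mxdiff_entry _ _ _ h) linear_sum summxE; apply: eq_bigr => l _.
by rewrite linearZ mxE (mxdiff_entry _ _ _ h).
Qed.

End E.

Section F.
Variable R : realType.
Variable n : nat.

Lemma xt_decomp (x0 : R) (t : 'cV[R]_n) :
  xt_pt x0 t = xt_pt x0 0 + \sum_(j < n) t j 0 *: @dir_t R n j.
Proof.
apply/matrixP => i k; rewrite /xt_pt (ord1 k) -(splitK i).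
case: (fintype.split i) => i' /=.
  rewrite col_mxEu [RHS]mxE col_mxEu summxE big1 ?addr0 // => j _; rewrite !mxE.
  by rewrite (_ : (lshift n i' == rshift 1 j) = false) ?mulr0 // -val_eqE /= (ord1 i').
rewrite col_mxEd [RHS]mxE col_mxEd summxE mxE add0r (bigD1 i') //= big1 ?addr0.
  by rewrite !mxE eqxx /= mulr1.
move=> j ji; rewrite !mxE.
by rewrite (_ : (rshift 1 i' == rshift 1 j) = false) ?mulr0 // -val_eqE /= eqn_add2l; apply/negbTE; rewrite eq_sym.
Qed.

Lemma chain_fact (Ks : 'I_n -> 'cV[R]_n -> 'M[R]_n) (u : 'cV[R]_(1 + n) -> 'cV[R]_n)
   (tau : 'cV[R]_n -> 'cV[R]_n) (V : set 'cV[R]_n) (x0 : R) p :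
  open V -> V p -> (forall q, V q -> u (xt_pt x0 (tau q)) = q) ->
  differentiable tau p ->
  (forall k, differentiable (fun z => u z k 0) (xt_pt x0 (tau p))) ->
  (forall j, 'D_(@dir_t R n j) u (xt_pt x0 (tau p)) =
      Ks j p *m 'D_(dir_x R n) u (xt_pt x0 (tau p))) ->
  forall v, v = \sum_(j < n) ('D_v tau p) j 0 *: (Ks j p *m 'D_(dir_x R n) u (xt_pt x0 (tau p))).
Proof.
move=> oV Vp uinv dtau du hK v.
set z := xt_pt x0 (tau p); set w := 'D_(dir_x R n) u z.
pose h := fun q => xt_pt x0 (tau q).
have hE : h = cst (xt_pt x0 0) + \sum_(j < n) (fun q => tau q j 0 *: @dir_t R n j).
  by apply/funext => q; rewrite /h xt_decomp /= fct_sumE.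
have taud : forall j, differentiable (fun q => tau q j 0) p.
  move=> j; exact: (differentiable_comp dtau (differentiable_coord (tau p) j 0)).
have hd : differentiable h p.
  rewrite hE; apply: differentiableD; first exact: differentiable_cst.
  by apply: differentiable_sum => j; apply: differentiableZl.
have Dh : 'D_v h p = \sum_(j < n) ('D_v tau p) j 0 *: @dir_t R n j.
  rewrite hE deriveD; last 2 first.
  - exact: derivable_cst.
  - by apply: derivable_sum => j; apply: diff_derivable; apply: differentiableZl.
  rewrite derive_cst add0r derive_sum; last first.
    by move=> j; apply: diff_derivable; apply: differentiableZl.
  apply: eq_bigr => j _.
  have := (mder_scale (diff_derivable (v:=v) (taud j)) (derivable_cst (@dir_t R n j) p v)).2.
  rewrite /= => ->; rewrite derive_cst scaler0 addr0; congr (_ *: _).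
  by rewrite (derive_mx (diff_derivable (v:=v) dtau)) mxE.
have uhd : forall k, differentiable (fun q => u (h q) k 0) p.
  by move=> k; exact: (differentiable_comp hd (du k)).
have uh : 'D_v (fun q => u (h q)) p = v.
  rewrite (@near_eq_derive _ _ _ _ id) ?derive_id //.
  have : nbhs p V by exact: open_nbhs_nbhs.
  by apply: filterS => q Vq; exact: uinv.
have duz : forall e, derivable u z e.
  by move=> e; apply/derivable_mxP => i j; rewrite (ord1 j); apply: diff_derivable.
apply/matrixP => k l; rewrite (ord1 l) -{1}uh.
have : derivable (fun q => u (h q)) p v.
  by apply/derivable_mxP => i j; rewrite (ord1 j); apply: diff_derivable.
move/derive_mx => ->; rewrite mxE.
rewrite (deriveE v (uhd k)).
have -> : (fun q => u (h q) k 0) = (fun y => u y k 0) \o h by [].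
rewrite diff_comp //= -(deriveE _ hd) Dh linear_sum summxE; apply: eq_bigr => j _.
rewrite linearZ /= -(deriveE _ (du k)) mxE.
by rewrite -hK (derive_mx (duz _)) mxE.
Qed.

End F.

Lemma zid2' (T : zmodType) (SX SY SZ SQ A Q : T) :
  SX - (A + SY) - SZ + (Q + SQ) = (SX - SY - SZ + SQ) + (Q - A).
Proof.
rewrite opprD !addrA.
rewrite (addrAC SX (-A)) (addrAC _ (-A) (-SZ)) (addrAC _ (-A) Q) (addrAC _ (-A) SQ).
by rewrite (addrAC _ Q SQ).
Qed.

Lemma final_alg (R : comNzRingType) n (t : 'I_n -> R) (Ki DKc DKMc DMKc : 'I_n -> 'M[R]_n)
   (M DMc AMc Ac : 'M[R]_n) (c : 'cV[R]_n) :
  (forall i, DMKc i *m c - DKMc i *m c - Ki i *m (DMc *m c) + M *m (DKc i *m c) = 0) ->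
  AMc = M *m Ac ->
  (\sum_(i < n) t i *: DMKc i) *m c - (AMc + \sum_(i < n) t i *: DKMc i) *m c
   - (\sum_(i < n) t i *: Ki i) *m (DMc *m c)
   + M *m ((Ac + \sum_(i < n) t i *: DKc i) *m c) = 0.
Proof.
move=> hT hA.
rewrite !mulmxDl mulmxDr !mulmx_suml mulmx_sumr hA -mulmxA.
have S : \sum_(i < n) t i *: (DMKc i *m c - DKMc i *m c - Ki i *m (DMc *m c) + M *m (DKc i *m c)) = 0.
  by rewrite big1 // => i _; rewrite hT scaler0.
rewrite zid2' subrr addr0 -[RHS]S.
rewrite [RHS](eq_bigr (fun i => t i *: (DMKc i *m c) - t i *: (DKMc i *m c)
   - t i *: (Ki i *m (DMc *m c)) + t i *: (M *m (DKc i *m c)))); last first.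
  by move=> i _; rewrite scalerDr !scalerBr.
rewrite big_split /= !sumrB.
congr (_ - _ - _ + _); apply: eq_bigr => i _; by rewrite -!scalemxAl -?scalemxAr -?scalemxAl.
Qed.





Unset Implicit Arguments.
Set Strict Implicit.

Theorem mainTheorem6 (R : realType) (n : nat) (U : set 'cV[R]_n)
    (Ks : 'I_n -> 'cV[R]_n -> 'M[R]_n)
    (W : set 'cV[R]_(1 + n)) (u : 'cV[R]_(1 + n) -> 'cV[R]_n) :
  open U ->
  op_frobenius_algebra U Ks ->
  (forall i j, symmetry_on U (Ks i) (Ks j)) ->
  open W ->
  mx_analytic_on W u ->
  (forall z, W z -> U (u z)) ->
  (forall z, W z -> forall j, 'D_(@dir_t R n j) u z = Ks j (u z) *m 'D_(dir_x R n) u z) ->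
  (forall z, W z -> (\matrix_(k < n, j < n) ('D_(@dir_t R n j) u z) k 0) \in unitmx) ->
  forall (x0 : R) (V : set 'cV[R]_n) (tau : 'cV[R]_n -> 'cV[R]_n),
    open V ->
    (forall p, V p -> W (xt_pt x0 (tau p)) /\ u (xt_pt x0 (tau p)) = p
                      /\ differentiable tau p) ->
    common_symmetry_on V (fun p => \sum_(i < n) tau p i 0 *: Ks i p) Ks.
Proof.
move=> oU [Kan [Kcom _]] Ksym oW uan uU hPDE hinv x0 V tau oV htau j.
pose K := fun p => \sum_(i < n) tau p i 0 *: Ks i p.
have UV : forall p, V p -> U p.
  by move=> p Vp; case: (htau p Vp) => Wz [uz _]; rewrite -uz; exact: uU.
have Kd : forall i p, U p -> mxdiff (Ks i) p.
  by move=> i p Up a b; exact: (analytic_diff (Kan i a b) Up).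
have comm : forall p, V p -> K p *m Ks j p = Ks j p *m K p.
  move=> p Vp; rewrite /K mulmx_suml mulmx_sumr; apply: eq_bigr => i _.
  by rewrite -scalemxAl -scalemxAr Kcom //; exact: UV.
split; first exact: comm.
move=> xi dxi p Vp.
have [Wz [uz dtau]] := htau p Vp.
have Up := UV p Vp.
set z := xt_pt x0 (tau p).
set w := 'D_(dir_x R n) u z.
have hK : forall k, 'D_(@dir_t R n k) u z = Ks k p *m w.
  by move=> k; rewrite (hPDE z Wz k) uz.
have du : forall k, differentiable (fun z => u z k 0) z.
  by move=> k; exact: (analytic_diff (uan k 0) Wz).
have chain := chain_fact oV Vp (fun q Vq => (htau q Vq).2.1) dtau du hK.
pose A := fun v => \sum_(i < n) ('D_v tau p) i 0 *: Ks i p.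
have Aw : forall v, A v *m w = v.
  move=> v; rewrite /A mulmx_suml.
  transitivity (\sum_(i < n) ('D_v tau p) i 0 *: (Ks i p *m w)); last exact: esym (chain v).
  by apply: eq_bigr => i _; rewrite scalemxAl.
have Acomm : forall k v, Ks k p *m A v = A v *m Ks k p.
  move=> k v; rewrite /A mulmx_sumr mulmx_suml; apply: eq_bigr => i _.
  by rewrite -scalemxAl -scalemxAr Kcom.
have AK : forall k v, A (Ks k p *m v) = Ks k p *m A v.
  move=> k v; apply/eqP; rewrite -subr_eq0; apply/eqP.
  set D := A (Ks k p *m v) - Ks k p *m A v.
  have Dw : D *m w = 0 by rewrite /D mulmxBl Aw -mulmxA Aw subrr.
  have Dc : forall l, D *m Ks l p = Ks l p *m D.
    move=> l; rewrite /D mulmxBl mulmxBr -Acomm -!mulmxA -Acomm !mulmxA (Kcom k l) //.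
  have DM : D *m (\matrix_(a < n, b < n) ('D_(@dir_t R n b) u z) a 0) = 0.
    apply/matrixP => a b; rewrite [RHS]mxE.
    transitivity ((D *m (Ks b p *m w)) a 0); last by rewrite mulmxA Dc -mulmxA Dw mulmx0 mxE.
    rewrite !mxE; apply: eq_bigr => c _; congr (_ * _); by rewrite mxE hK.
  by have := mulmxK (hinv z Wz) D; rewrite DM mul0mx => <-.
have dtauv : forall v, derivable tau p v by move=> v; exact: (diff_derivable (v:=v) dtau).
have tauij : forall i v, derivable (fun q => tau q i 0) p v.
  by move=> i v; exact: ((derivable_mxP tau p v).1 (dtauv v) i 0).
have Kdv : forall i v, derivable (Ks i) p v.
  by move=> i v; exact: (mxdiff_derivable (Kd i p Up) (v:=v)).
have dK : forall v, derivable K p v /\ 'D_v K p = A v + \sum_(i < n) tau p i 0 *: 'D_v (Ks i) p.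
  move=> v.
  have -> : K = \sum_(i < n) (fun q => tau q i 0 *: Ks i q).
    by apply/funext => q; rewrite /K fct_sumE.
  have hi : forall i, derivable (fun q => tau q i 0 *: Ks i q) p v.
    by move=> i; exact: (mder_scale (tauij i v) (Kdv i v)).1.
  split; first exact: derivable_sum.
  rewrite derive_sum // /A -big_split /=; apply: eq_bigr => i _.
  by rewrite (mder_scale (tauij i v) (Kdv i v)).2 (derive_mx (dtauv v)) mxE.
have dxi' : forall v, derivable xi p v.
  by move=> v; exact: (diff_derivable (v:=v) (dxi p Vp)).
change (opbracket K (Ks j) xi xi p = 0).
rewrite (bracket_expand (fun v => (dK v).1) (Kdv j) dxi' (comm p Vp)).
set c := xi p.
have Ti : forall i, 'D_(Ks i p *m c) (Ks j) p *m c - 'D_(Ks j p *m c) (Ks i) p *m c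
    - Ks i p *m ('D_c (Ks j) p *m c) + Ks j p *m ('D_c (Ks i) p *m c) = 0.
  move=> i; have := Ksym i j (cst c) (fun q _ => differentiable_cst c q) p Up.
  by rewrite (bracket_expand (Kdv i) (Kdv j) (fun v => derivable_cst c p v) (Kcom i j p Up)).
have Kc : K p *m c = \sum_(i < n) tau p i 0 *: (Ks i p *m c).
  by rewrite /K mulmx_suml; apply: eq_bigr => i _; rewrite scalemxAl.
rewrite (dK (Ks j p *m c)).2 (dK c).2 Kc (mxdiff_lin _ _ (Kd j p Up)).
exact: (final_alg (fun i => tau p i 0) Ti (AK j c)).
Qed.
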